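(* Let $(c_{i,j})_{0\le i,j\le 3}$ be real numbers satisfying the averaging equation (E0) and the regularity equations (R1)–(R9). Let $$L=\begin{pmatrix} c_{1,1}&c_{0,1}&c_{1,0}&c_{0,0}\\ c_{3,1}&c_{2,1}&c_{3,0}&c_{2,0}\\ c_{1,3}&c_{0,3}&c_{1,2}&c_{0,2}\\ c_{3,3}&c_{2,3}&c_{3,2}&c_{2,2}\end{pmatrix}.$$ Then the eigenvalues of $L$, counted with algebraic multiplicity, are $1$, $\tfrac12$, $\tfrac12$, and $c_{2,2}+c_{3,3}-c_{3,2}-c_{2,3}$.
   Context: (E0): $\sum_{i=0}^3\sum_{j=0}^3 c_{i,j}=4$. Regularity equations: (R1) $c_{0,1}+c_{0,3}+c_{2,1}+c_{2,3}=c_{0,0}+c_{0,2}+c_{2,0}+c_{2,2}$; (R2) $c_{1,1}+c_{1,3}+c_{3,1}+c_{3,3}=c_{0,0}+c_{0,2}+c_{2,0}+c_{2,2}$; (R3) $c_{1,0}+c_{1,2}+c_{3,0}+c_{3,2}=c_{0,0}+c_{0,2}+c_{2,0}+c_{2,2}$; (R4) $c_{2,1}+c_{2,3}=c_{2,0}+c_{2,2}$; (R5) $c_{1,1}+c_{1,3}+3c_{3,1}+3c_{3,3}=2c_{2,0}+2c_{2,2}$; (R6) $c_{1,0}+c_{1,2}+3c_{3,0}+3c_{3,2}=2c_{2,0}+2c_{2,2}$; (R7) $c_{0,1}+c_{2,1}+3c_{0,3}+3c_{2,3}=2c_{0,2}+2c_{2,2}$; (R8) $c_{1,1}+c_{3,1}+3c_{1,3}+3c_{3,3}=2c_{0,2}+2c_{2,2}$;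 (R9) $c_{1,2}+c_{3,2}=c_{0,2}+c_{2,2}$. *)

(* Defs.v *)
From HB Require Import structures.
From mathcomp Require Import all_boot all_order all_algebra.
Set Implicit Arguments. Unset Strict Implicit. Unset Printing Implicit Defensive.
Import Order.TTheory GRing.Theory Num.Theory.
Local Open Scope ring_scope.

Definition cc {R : ringType} (c : 'M[R]_4) (i j : nat) : R := c (inord i) (inord j).

(* The matrix L of the paper:
     row 0: c11 c01 c10 c00
     row 1: c31 c21 c30 c20
     row 2: c13 c03 c12 c02
     row 3: c33 c23 c32 c22
   i.e. L_{r,s} = c_{2(r mod 2) + (1 - s mod 2), 2(r div 2) + (1 - s div 2)}. *)
Definition Lmat {R : ringType} (c : 'M[R]_4) : 'M[R]_4 :=
  \matrix_(r < 4, s < 4)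
     cc c (2 * (r %% 2) + (1 - s %% 2))%N (2 * (r %/ 2) + (1 - s %/ 2))%N.

(* Main.v *)
From HB Require Import structures.
Require Import Defs.
From mathcomp Require Import all_boot all_order all_algebra ring lra.
Import Order.TTheory GRing.Theory Num.Theory.
Local Open Scope ring_scope.



Lemma det_gen3 (R : comNzRingType) (g : nat -> nat -> R) :
  \det (\matrix_(i < 3, j < 3) g i j) =
  g 0 0 * (g 1 1 * g 2 2 - g 1 2 * g 2 1)
  - g 0 1 * (g 1 0 * g 2 2 - g 1 2 * g 2 0)
  + g 0 2 * (g 1 0 * g 2 1 - g 1 1 * g 2 0).
Proof.
rewrite (expand_det_row _ 0) !big_ord_recl big_ord0 /cofactor.
rewrite !(expand_det_row _ 0) !big_ord_recl !big_ord0 /cofactor.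
rewrite !det_mx11 !mxE /bump /=.
rewrite !expr0 !expr1 ?expr2; ring.
Qed.

Lemma det_gen4' (R : comNzRingType) (g : nat -> nat -> R) :
  \det (\matrix_(i < 4, j < 4) g i j) =
  g 0 0 * (g 1 1 * (g 2 2 * g 3 3 - g 2 3 * g 3 2) - g 1 2 * (g 2 1 * g 3 3 - g 2 3 * g 3 1) + g 1 3 * (g 2 1 * g 3 2 - g 2 2 * g 3 1))
- g 0 1 * (g 1 0 * (g 2 2 * g 3 3 - g 2 3 * g 3 2) - g 1 2 * (g 2 0 * g 3 3 - g 2 3 * g 3 0) + g 1 3 * (g 2 0 * g 3 2 - g 2 2 * g 3 0))
+ g 0 2 * (g 1 0 * (g 2 1 * g 3 3 - g 2 3 * g 3 1) - g 1 1 * (g 2 0 * g 3 3 - g 2 3 * g 3 0) + g 1 3 * (g 2 0 * g 3 1 - g 2 1 * g 3 0))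
- g 0 3 * (g 1 0 * (g 2 1 * g 3 2 - g 2 2 * g 3 1) - g 1 1 * (g 2 0 * g 3 2 - g 2 2 * g 3 0) + g 1 2 * (g 2 0 * g 3 1 - g 2 1 * g 3 0)).
Proof.
rewrite (expand_det_row _ 0) !big_ord_recl big_ord0 /cofactor.
have E : forall j : 'I_4, \det (row' 0 (col' j (\matrix_(i < 4, j0 < 4) g i j0))) =
   let h := (fun x y => g (bump 0 x) (bump j y)) in
  h 0 0 * (h 1 1 * h 2 2 - h 1 2 * h 2 1)
  - h 0 1 * (h 1 0 * h 2 2 - h 1 2 * h 2 0)
  + h 0 2 * (h 1 0 * h 2 1 - h 1 1 * h 2 0).
  move=> j /=; rewrite -(@det_gen3 _ (fun x y => g (bump 0 x) (bump j y))).
  by congr (\det _); apply/matrixP => a b; rewrite !mxE.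
rewrite !E !mxE /bump /=.
rewrite !expr0 !expr1 ?expr2 /=; ring.
Qed.

Theorem mainTheorem7 (R : realFieldType) (c : 'M[R]_4) :
  (* (E0) *)
  \sum_(i < 4) \sum_(j < 4) c i j = 4 ->
  (* (R1) *)
  cc c 0 1 + cc c 0 3 + cc c 2 1 + cc c 2 3 = cc c 0 0 + cc c 0 2 + cc c 2 0 + cc c 2 2 ->
  (* (R2) *)
  cc c 1 1 + cc c 1 3 + cc c 3 1 + cc c 3 3 = cc c 0 0 + cc c 0 2 + cc c 2 0 + cc c 2 2 ->
  (* (R3) *)
  cc c 1 0 + cc c 1 2 + cc c 3 0 + cc c 3 2 = cc c 0 0 + cc c 0 2 + cc c 2 0 + cc c 2 2 ->
  (* (R4) *)
  cc c 2 1 + cc c 2 3 = cc c 2 0 + cc c 2 2 ->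
  (* (R5) *)
  cc c 1 1 + cc c 1 3 + 3 * cc c 3 1 + 3 * cc c 3 3 = 2 * cc c 2 0 + 2 * cc c 2 2 ->
  (* (R6) *)
  cc c 1 0 + cc c 1 2 + 3 * cc c 3 0 + 3 * cc c 3 2 = 2 * cc c 2 0 + 2 * cc c 2 2 ->
  (* (R7) *)
  cc c 0 1 + cc c 2 1 + 3 * cc c 0 3 + 3 * cc c 2 3 = 2 * cc c 0 2 + 2 * cc c 2 2 ->
  (* (R8) *)
  cc c 1 1 + cc c 3 1 + 3 * cc c 1 3 + 3 * cc c 3 3 = 2 * cc c 0 2 + 2 * cc c 2 2 ->
  (* (R9) *)
  cc c 1 2 + cc c 3 2 = cc c 0 2 + cc c 2 2 ->
  char_poly (Lmat c) =
    ('X - 1%:P) * ('X - (1 / 2 : R)%:P) ^+ 2 *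
    ('X - (cc c 2 2 + cc c 3 3 - cc c 3 2 - cc c 2 3)%:P).
Proof.
move=> E0 R1 R2 R3 R4 R5 R6 R7 R8 R9.
have E0' : \sum_(i < 4) \sum_(j < 4) cc c i j = 4.
  rewrite -E0; apply: eq_bigr => i _; apply: eq_bigr => j _.
  by rewrite /cc !inord_val.
clear E0.
pose G := fun i j : nat => ((if i == j then 2 * 'X else 0) -
    (2 * cc c (2 * (i %% 2) + (1 - j %% 2)) (2 * (i %/ 2) + (1 - j %/ 2)))%:P).
have Hm : 2 *: char_poly_mx (Lmat c) = \matrix_(i < 4, j < 4) G i j.
  apply/matrixP => i j; rewrite !mxE /G.
  have -> : (nat_of_ord i == nat_of_ord j) = (i == j) by [].
  case: (i == j); rewrite /= ?mulr1n ?mulr0n rmorphM /= polyC_natr; ring.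
have H16 : (16 : {poly R}) != 0.
  by rewrite -polyC_natr polyC_eq0 pnatr_eq0.
apply: (mulfI H16) => /=.
have -> : (16 : {poly R}) * char_poly (Lmat c) = \det (2 *: char_poly_mx (Lmat c)).
  by rewrite detZ /char_poly; congr (_ * _); rewrite -natrX.
rewrite Hm (@det_gen4' _ G) /G /=.
have hk : 2 * ((1 / 2 : R)%:P) = 1 :> {poly R}.
  by rewrite -polyC_natr -rmorphM /= mul1r divff ?pnatr_eq0.
move: E0' R1 R2 R3 R4 R5 R6 R7 R8 R9 hk.
rewrite !big_ord_recl !big_ord0 /bump /=.
move: (cc c) ((1 / 2 : R)%:P) => f k.
move=> E0 R1 R2 R3 R4 R5 R6 R7 R8 R9 hk.
have -> : 16 * (('X - 1%:P) * ('X - k) ^+ 2 * ('X - (f 2%N 2%N + f 3%N 3%N - f 3%N 2%N - f 2%N 3%N)%:P))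
  = 4 * ('X - 1%:P) * (2 * 'X - 2 * k) ^+ 2 * ('X - (f 2%N 2%N + f 3%N 3%N - f 3%N 2%N - f 2%N 3%N)%:P) by ring.
rewrite hk.
have e00 : 2 * f 0%N 0%N = 2 - 2 * f 1%N 2%N - 2 * f 2%N 1%N + 2 * f 2%N 2%N - 2 * f 2%N 3%N - 2 * f 3%N 2%N by lra.
have e10 : 2 * f 1%N 0%N = 3 - 2 * f 1%N 2%N - 2 * f 2%N 1%N - 2 * f 2%N 3%N by lra.
have e01 : 2 * f 0%N 1%N = 3 - 2 * f 1%N 2%N - 2 * f 2%N 1%N - 2 * f 3%N 2%N by lra.
have e11 : 2 * f 1%N 1%N = 4 - 2 * f 1%N 2%N - 2 * f 2%N 1%N - 2 * f 2%N 3%N - 2 * f 3%N 2%N + 2 * f 3%N 3%N by lra.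
have e20 : 2 * f 2%N 0%N = 2 * f 2%N 1%N - 2 * f 2%N 2%N + 2 * f 2%N 3%N by lra.
have e02 : 2 * f 0%N 2%N = 2 * f 1%N 2%N - 2 * f 2%N 2%N + 2 * f 3%N 2%N by lra.
have e30 : 2 * f 3%N 0%N = -1 + 2 * f 2%N 1%N + 2 * f 2%N 3%N - 2 * f 3%N 2%N by lra.
have e03 : 2 * f 0%N 3%N = -1 + 2 * f 1%N 2%N - 2 * f 2%N 3%N + 2 * f 3%N 2%N by lra.
have e31 : 2 * f 3%N 1%N = -1 + 2 * f 2%N 1%N + 2 * f 2%N 3%N - 2 * f 3%N 3%N by lra.
have e13 : 2 * f 1%N 3%N = -1 + 2 * f 1%N 2%N + 2 * f 3%N 2%N - 2 * f 3%N 3%N by lra.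
rewrite e00 e10 e01 e11 e20 e02 e30 e03 e31 e13.
ring.
Qed.
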